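(* Let the setting, Assumption A and Assumption B below hold, with agents and data sampled without replacement, and let $w_i$ be the iterates generated by the ISFedAvg algorithm below, with $\widetilde w_i=w^o-w_i$. For sufficiently small step-size $\mu$, the mean-square error converges exponentially fast: $$\mathbb{E}\|\widetilde w_i\|^2\le O\big((\lambda')^i\big)+O(\mu)\big(\sigma_s^2+\xi^2\big)+O(\mu^2)\frac1K\sum_{k=1}^K\sigma_{q,k}^2,$$ where $\lambda'=1-O(\mu)+O(\mu^2)\in[0,1)$, and $$\sigma_s^2=\frac{1}{K^2}\sum_{k=1}^K\frac{1}{p_k}\Big\{\sigma_{s,k}^2+\Big(3+\frac{6}{E_kB_k}\Big)\|\nabla_wP_k(w^o)\|^2\Big\},\quad \sigma_{s,k}^2=\frac{6}{E_kB_kN_k^2}\sum_{n=1}^{N_k}\frac{1}{p_n^{(k)}}\|\nabla_wQ_k(w^o;x_{k,n})\|^2,$$ $$\sigma_{q,k}^2=\frac{3}{B_kN_k^2}\sum_{n=1}^{N_k}\frac{1}{p_n^{(k)}}\|\nabla_wQ_k(w_k^o;x_{k,n})\|^2.$$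
   Context: There are $K$ agents; agent $k$ holds data points $x_{k,1},\dots,x_{k,N_k}$, a loss $Q_k(w;x)$ differentiable in $w\in\mathbb{R}^M$, and the empirical risk $P_k(w)=\frac1{N_k}\sum_{n=1}^{N_k}Q_k(w;x_{k,n})$. Let $w^o=\arg\min_w\frac1K\sum_kP_k(w)$ and $w_k^o=\arg\min_wP_k(w)$. Assumption A: each $P_k$ is $\nu$-strongly convex ($\nu>0$), each $Q_k(\cdot;x_{k,n})$ is convex with $\delta$-Lipschitz gradient. Assumption B: $\|w_k^o-w^o\|\le\xi$ for all $k$. ISFedAvg with step-size $\mu>0$ and initial point $w_0$: at iteration $i=1,2,\dots$, select $L$ agents $\mathcal{L}_i$ from $\{1,\dots,K\}$ without replacement with $\mathbb{P}(k\in\mathcal{L}_i)=Lp_k$ ($p_k>0$, $\sum_kp_k=1$); each $k\in\mathcal{L}_i$ sets $w_{k,0}=w_{i-1}$ and for $e=1,\dots,E_k$ draws a mini-batch $\mathcal{B}_{k,e}$ of $B_k$ indices from $\{1,\dots,N_k\}$ without replacement with $\mathbb{P}(n\in\mathcal{B}_{k,e})=B_kp_n^{(k)}$ ($p_n^{(k)}>0$, $\sum_np_n^{(k)}=1$), independently of the past, and updates $w_{k,e}=w_{k,e-1}-\frac{\mu}{Kp_kE_kB_k}\sum_{b\in\mathcal{B}_{k,e}}\frac{1}{N_kp_b^{(k)}}\nabla_wQ_k(w_{k,e-1};x_{k,b})$; then $w_i=\frac1L\sum_{k\in\mathcal{L}_i}w_{k,E_k}$. The inclusion probabilities are fixed across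 iterations. The notation $O(\mu^a)$ (resp. $O((\lambda')^i)$) denotes a term bounded by $C\mu^a$ (resp. $C(\lambda')^i$) with $C$ independent of $\mu$ and $i$ (it may depend on the problem data, inclusion probabilities and initialization). *)

(* Defs.v *)
From HB Require Import structures.
From mathcomp Require Import all_boot all_order all_algebra.
From mathcomp Require Import all_classical all_reals all_analysis.
Set Implicit Arguments. Unset Strict Implicit. Unset Printing Implicit Defensive.
Import Order.TTheory GRing.Theory Num.Theory.
Import numFieldNormedType.Exports.
Local Open Scope ring_scope.

Section ISFedAvg.
Variables (R : realType) (M : nat).
Notation vec := 'rV[R]_M.

Definition dot (u v : vec) : R := (u *m v^T) 0 0.
Definition norm2 (v : vec) : R := dot v v.

Definition convex_fun (f : vec -> R) : Prop :=
  forall (u v : vec) (t : R), 0 <= t <= 1 ->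
    f (t *: u + (1 - t) *: v) <= t * f u + (1 - t) * f v.

Definition strongly_convex (nu : R) (f : vec -> R) : Prop :=
  forall (u v : vec) (t : R), 0 <= t <= 1 ->
    f (t *: u + (1 - t) *: v)
      <= t * f u + (1 - t) * f v - nu / 2 * t * (1 - t) * norm2 (u - v).

Definition has_gradient (f : vec -> R) (g : vec -> vec) : Prop :=
  forall w : vec, differentiable f w /\ forall v : vec, 'd f w v = dot (g w) v.

Definition lipschitz_grad (delta : R) (g : vec -> vec) : Prop :=
  forall u v : vec, norm2 (g u - g v) <= delta ^+ 2 * norm2 (u - v).

Definition is_minimizer (f : vec -> R) (w : vec) : Prop :=
  forall v : vec, f w <= f v.

(* a sampling design without replacement over subsets of a finite set:
   a probability distribution on subsets of size n with first-order
   inclusion probabilities P(j in A) = n * p j *)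
Definition sampling_design (T : finType) (n : nat) (p : T -> R)
    (pi : {set T} -> R) : Prop :=
  [/\ forall A, 0 <= pi A,
      \sum_(A : {set T}) pi A = 1,
      forall A, pi A != 0 -> #|A| = n
    & forall j, \sum_(A : {set T} | j \in A) pi A = n%:R * p j].

(* finite discrete distributions on R^M, as lists of (weight, point) *)
Definition fdist := seq (R * vec).
Definition fexp (d : fdist) (f : vec -> R) : R := \sum_(x <- d) x.1 * f x.2.
Definition fbind (d : fdist) (g : vec -> fdist) : fdist :=
  flatten [seq [seq (x.1 * y.1, y.2) | y <- g x.2] | x <- d].

Variable K : nat.
Variables (N : 'I_K -> nat) (gQ : forall k : 'I_K, 'I_(N k) -> vec -> vec).
Variables (p : 'I_K -> R) (pn : forall k : 'I_K, 'I_(N k) -> R).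
Variables (E B : 'I_K -> nat) (L : nat) (mu : R).
Variables (piL : {set 'I_K} -> R) (piB : forall k : 'I_K, {set 'I_(N k)} -> R).

Definition local_update (k : 'I_K) (A : {set 'I_(N k)}) (w : vec) : vec :=
  w - (mu / (K%:R * p k * (E k)%:R * (B k)%:R)) *:
      \sum_(b in A) (((N k)%:R * pn b)^-1 *: gQ b w).

(* distribution of w_{k,e} given w_{k,0} = w; mini-batches drawn
   independently at each local step with design piB k *)
Fixpoint local_run (k : 'I_K) (e : nat) (w : vec) : fdist :=
  match e with
  | 0 => [:: (1, w)]
  | e'.+1 => fbind (local_run k e' w)
      (fun v => [seq (piB A, local_update A v) | A <- enum [set: {set 'I_(N k)}]])
  end.

(* distribution of sum_{k in ks} w_{k,E_k}, local runs independent across agents *)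
Fixpoint sum_local (ks : seq 'I_K) (w : vec) : fdist :=
  match ks with
  | [::] => [:: (1, 0)]
  | k :: ks' => fbind (local_run k (E k) w)
      (fun u => [seq (x.1, u + x.2) | x <- sum_local ks' w])
  end.

(* distribution of w_i given w_{i-1} = w: agents sampled with design piL *)
Definition fed_step (w : vec) : fdist :=
  flatten [seq [seq (piL A * x.1, (L%:R)^-1 *: x.2) | x <- sum_local (enum A) w]
          | A <- enum [set: {set 'I_K}]].

Fixpoint isfedavg (i : nat) (w0 : vec) : fdist :=
  match i with
  | 0 => [:: (1, w0)]
  | i'.+1 => fbind (isfedavg i' w0) fed_step
  end.

Definition emp_risk (Q : forall k : 'I_K, 'I_(N k) -> vec -> R) (k : 'I_K) (w : vec) : R :=
  ((N k)%:R)^-1 * \sum_(n < N k) Q k n w.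
Definition grad_risk (k : 'I_K) (w : vec) : vec :=
  ((N k)%:R)^-1 *: \sum_(n < N k) gQ n w.

Definition sigma_sk2 (k : 'I_K) (wo : vec) : R :=
  6 / ((E k)%:R * (B k)%:R * (N k)%:R ^+ 2) *
  \sum_(n < N k) (pn n)^-1 * norm2 (gQ n wo).
Definition sigma_s2 (wo : vec) : R :=
  ((K%:R) ^+ 2)^-1 * \sum_(k < K) (p k)^-1 *
    (sigma_sk2 k wo + (3 + 6 / ((E k)%:R * (B k)%:R)) * norm2 (grad_risk k wo)).
Definition sigma_qk2 (k : 'I_K) (wko : vec) : R :=
  3 / ((B k)%:R * (N k)%:R ^+ 2) * \sum_(n < N k) (pn n)^-1 * norm2 (gQ n wko).

End ISFedAvg.

(* Main.v *)
Require Import Defs.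
From HB Require Import structures.
From mathcomp Require Import all_boot all_order all_algebra.
From mathcomp Require Import all_classical all_reals all_analysis.
Import Order.TTheory GRing.Theory Num.Theory.
Import numFieldNormedType.Exports.
Local Open Scope ring_scope.
From mathcomp Require Import ring lra.
Set Implicit Arguments. Unset Strict Implicit. Unset Printing Implicit Defensive.


Section DotLemmas.
Variables (R : realType) (M : nat).
Notation vec := 'rV[R]_M.
Implicit Types u v w : vec.

Lemma dotE u v : dot u v = \sum_j u 0 j * v 0 j.
Proof. by rewrite /dot !mxE; apply: eq_bigr => j _; rewrite mxE. Qed.

Lemma dotC u v : dot u v = dot v u.
Proof. by rewrite !dotE; apply: eq_bigr => j _; rewrite mulrC. Qed.

Lemma dotDl u v w : dot (u + v) w = dot u w + dot v w.
Proof. by rewrite !dotE -big_split; apply: eq_bigr => j _; rewrite !mxE mulrDl. Qed.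

Lemma dotDr u v w : dot w (u + v) = dot w u + dot w v.
Proof. by rewrite dotC dotDl !(dotC w). Qed.

Lemma dotZl a u v : dot (a *: u) v = a * dot u v.
Proof. by rewrite !dotE mulr_sumr; apply: eq_bigr => j _; rewrite !mxE mulrA. Qed.

Lemma dotZr a u v : dot u (a *: v) = a * dot u v.
Proof. by rewrite dotC dotZl dotC. Qed.

Lemma dotNl u v : dot (- u) v = - dot u v.
Proof. by rewrite -scaleN1r dotZl mulN1r. Qed.

Lemma dotNr u v : dot u (- v) = - dot u v.
Proof. by rewrite dotC dotNl dotC. Qed.

Lemma dotBl u v w : dot (u - v) w = dot u w - dot v w.
Proof. by rewrite dotDl dotNl. Qed.

Lemma dotBr u v w : dot w (u - v) = dot w u - dot w v.
Proof. by rewrite dotDr dotNr. Qed.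

Lemma dot0l v : dot 0 v = 0.
Proof. by rewrite -(scale0r 0) dotZl mul0r. Qed.

Lemma dot0r v : dot v 0 = 0.
Proof. by rewrite dotC dot0l. Qed.

Lemma dot_suml (I : Type) (r : seq I) (P : pred I) (f : I -> vec) v :
  dot (\sum_(i <- r | P i) f i) v = \sum_(i <- r | P i) dot (f i) v.
Proof.
elim/big_rec2: _ => [|i x y _ <-]; first exact: dot0l.
by rewrite dotDl.
Qed.

Lemma dot_sumr (I : Type) (r : seq I) (P : pred I) (f : I -> vec) v :
  dot v (\sum_(i <- r | P i) f i) = \sum_(i <- r | P i) dot v (f i).
Proof. by rewrite dotC dot_suml; apply: eq_bigr => i _; rewrite dotC. Qed.

Lemma norm2_ge0 v : 0 <= norm2 v.
Proof. by rewrite /norm2 dotE sumr_ge0 // => j _; rewrite -expr2 sqr_ge0. Qed.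

Lemma norm2D u v : norm2 (u + v) = norm2 u + 2 * dot u v + norm2 v.
Proof. rewrite /norm2 !dotDl !dotDr (dotC v u); ring. Qed.

Lemma norm2B u v : norm2 (u - v) = norm2 u - 2 * dot u v + norm2 v.
Proof. rewrite /norm2 !dotBl !dotBr (dotC v u); ring. Qed.

Lemma norm2Z a v : norm2 (a *: v) = a ^+ 2 * norm2 v.
Proof. by rewrite /norm2 dotZl dotZr mulrA expr2. Qed.

Lemma norm2N v : norm2 (- v) = norm2 v.
Proof. by rewrite /norm2 dotNl dotNr opprK. Qed.

Lemma norm2_sym u v : norm2 (u - v) = norm2 (v - u).
Proof. by rewrite -norm2N opprB. Qed.

Lemma young u v t : 0 < t -> 2 * dot u v <= t * norm2 u + t^-1 * norm2 v.
Proof.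
move=> t0.
have := norm2_ge0 (t *: u - v); rewrite norm2B norm2Z dotZl => h.
have h2 : 0 <= t^-1 * (t ^+ 2 * norm2 u - 2 * (t * dot u v) + norm2 v).
  by apply: mulr_ge0; [rewrite invr_ge0 ltW | lra].
have e : t^-1 * (t ^+ 2 * norm2 u - 2 * (t * dot u v) + norm2 v) =
  t * norm2 u - 2 * dot u v + t^-1 * norm2 v by field; rewrite gt_eqF.
rewrite e in h2; lra.
Qed.

Lemma young_abs u v t : 0 < t -> - (2 * dot u v) <= t * norm2 u + t^-1 * norm2 v.
Proof. move=> t0; have := young (- u) v t0; rewrite dotNl norm2N; lra. Qed.

Lemma norm2D_le u v : norm2 (u + v) <= 2 * norm2 u + 2 * norm2 v.
Proof. have := young u v ltr01; rewrite invr1 norm2D; lra. Qed.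

Lemma norm2_sum_le (I : finType) (A : {pred I}) (f : I -> vec) :
  norm2 (\sum_(i in A) f i) <= #|A|%:R * \sum_(i in A) norm2 (f i).
Proof.
rewrite {1}/norm2 dot_suml.
under eq_bigr => i _ do rewrite dot_sumr.
have h : forall i j, 2 * dot (f i) (f j) <= norm2 (f i) + norm2 (f j).
  by move=> i j; have := young (f i) (f j) ltr01; rewrite invr1 !mul1r.
rewrite -(ler_pM2l (ltr0Sn _ 1)) mulr_sumr.
apply: le_trans (_ : \sum_(i in A) \sum_(j in A) (norm2 (f i) + norm2 (f j)) <= _).
  apply: ler_sum => i _; rewrite mulr_sumr; apply: ler_sum => j _; exact: h.
rewrite (eq_bigr (fun i => #|A|%:R * norm2 (f i) + \sum_(j in A) norm2 (f j))); last first.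
  by move=> i _; rewrite big_split /= sumr_const mulr_natl.
rewrite big_split /= sumr_const -mulr_sumr mulr_natl.
rewrite mulr2n mulrDl mul1r; done.
Qed.

Lemma norm2_sum_le_all (I : finType) (f : I -> vec) :
  norm2 (\sum_i f i) <= #|I|%:R * \sum_i norm2 (f i).
Proof.
have := @norm2_sum_le I predT f.
by rewrite (eq_bigl (fun i => true)) // [X in _ <= _ * X](eq_bigl (fun i => true)).
Qed.

End DotLemmas.

Section FdistLemmas.
Variables (R : realType) (M : nat).
Notation vec := 'rV[R]_M.
Implicit Types (d : fdist R M) (f g : vec -> R).

Definition fnn d := forall x, x \in d -> 0 <= x.1.
Definition fmass d := fexp d (fun _ => 1).

Lemma fexp_bind d (h : vec -> fdist R M) f :
  fexp (fbind d h) f = fexp d (fun v => fexp (h v) f).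
Proof.
rewrite /fexp /fbind big_flatten /= big_map; apply: eq_bigr => x _.
rewrite big_map mulr_sumr; apply: eq_bigr => y _; by rewrite mulrA.
Qed.

Lemma fexp_map (T : Type) (s : seq T) (a : T -> R) (h : T -> vec) f :
  fexp [seq (a x, h x) | x <- s] f = \sum_(x <- s) a x * f (h x).
Proof. by rewrite /fexp big_map. Qed.

Lemma fexpD d f g : fexp d (fun v => f v + g v) = fexp d f + fexp d g.
Proof. by rewrite /fexp -big_split; apply: eq_bigr => x _; rewrite mulrDr. Qed.

Lemma fexpZ d c f : fexp d (fun v => c * f v) = c * fexp d f.
Proof. by rewrite /fexp mulr_sumr; apply: eq_bigr => x _; rewrite mulrCA. Qed.

Lemma fexpN d f : fexp d (fun v => - f v) = - fexp d f.
Proof.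
rewrite -mulN1r -fexpZ /fexp; apply: eq_bigr => x _; by rewrite mulN1r.
Qed.

Lemma fexpB d f g : fexp d (fun v => f v - g v) = fexp d f - fexp d g.
Proof. by rewrite fexpD fexpN. Qed.

Lemma fexp_cst d c : fexp d (fun _ => c) = c * fmass d.
Proof. by rewrite -fexpZ /fexp; apply: eq_bigr => x _; rewrite mulr1. Qed.

Lemma fexp_ext d f g : (forall v, f v = g v) -> fexp d f = fexp d g.
Proof. by move=> e; rewrite /fexp; apply: eq_bigr => x _; rewrite e. Qed.

Lemma fexp_le d f g : fnn d -> (forall v, f v <= g v) -> fexp d f <= fexp d g.
Proof.
move=> nn le; rewrite /fexp big_seq_cond [X in _ <= X]big_seq_cond.
by apply: ler_sum => x /andP [xd _]; apply: ler_wpM2l; [exact: nn | exact: le].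
Qed.

Lemma fexp_ge0 d f : fnn d -> (forall v, 0 <= f v) -> 0 <= fexp d f.
Proof.
move=> nn le; rewrite /fexp big_seq_cond.
by apply: sumr_ge0 => x /andP [xd _]; apply: mulr_ge0; [exact: nn | exact: le].
Qed.

Lemma fnn_bind d (h : vec -> fdist R M) : fnn d -> (forall v, fnn (h v)) -> fnn (fbind d h).
Proof.
move=> nd nh z; rewrite /fbind => /flattenP [s /mapP [x xd ->] /mapP [y yh ->]] /=.
by apply: mulr_ge0; [exact: (nd x xd) | exact: (nh _ y yh)].
Qed.

Lemma fnn_map (T : Type) (s : seq T) (a : T -> R) (h : T -> vec) :
  (forall x, 0 <= a x) -> fnn [seq (a x, h x) | x <- s].
Proof.
move=> a0; elim: s => [|x s IH] z //=; rewrite in_cons => /orP [/eqP -> /= | /IH //]; exact: a0.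
Qed.

Lemma fmass_bind d (h : vec -> fdist R M) :
  fmass d = 1 -> (forall v, fmass (h v) = 1) -> fmass (fbind d h) = 1.
Proof.
move=> md mh; rewrite /fmass fexp_bind.
by rewrite (fexp_ext _ (g := fun _ => 1)) // => v; rewrite -[RHS](mh v).
Qed.

End FdistLemmas.

Section Analysis.
Local Open Scope classical_set_scope.
Variables (R : realType) (M : nat).
Notation vec := 'rV[R]_M.

Lemma grad_quot (f : vec -> R) g a v : has_gradient f g ->
  (fun h : R => h^-1 * (f (h *: v + a) - f a)) @ 0^' --> dot (g a) v.
Proof.
move=> H; have [df dg] := H a.
have := @diff_derivable _ _ _ f a v df; rewrite /derivable => hc.
have e : derive f a v = dot (g a) v by rewrite deriveE // dg.
rewrite -e; exact: hc.
Qed.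


Lemma cvg_sumF (T : Type) (F : set_system T) (FF : Filter F) (I : Type) (r : seq I) (P : pred I)
  (G : I -> T -> R) (l : I -> R) :
  (forall i, G i x @[x --> F] --> l i) ->
  (\sum_(i <- r | P i) G i x) @[x --> F] --> \sum_(i <- r | P i) l i.
Proof.
move=> H; elim: r => [|i r IH].
  rewrite big_nil; under eq_cvg do rewrite big_nil; exact: cvg_cst.
rewrite big_cons; under eq_cvg do rewrite big_cons.
case: (P i) => //; exact: cvgD.
Qed.

Lemma dnbhs_right (f : R -> R) (l : R) : f @ (0:R)^' --> l -> f @ (0:R)^'+ --> l.
Proof.
move=> h; apply: cvg_trans h; apply: cvg_fmap2 => A /=.
rewrite /dnbhs /within /=; apply: filterS => x H xpos; apply: H.
by rewrite gt_eqF.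
Qed.


Lemma risk_quot K (N : 'I_K -> nat) (Q : forall k : 'I_K, 'I_(N k) -> vec -> R)
  (gQ : forall k : 'I_K, 'I_(N k) -> vec -> vec) k a v :
  (forall n, has_gradient (Q k n) (gQ k n)) ->
  (fun h : R => h^-1 * (emp_risk Q k (h *: v + a) - emp_risk Q k a)) @ 0^'
    --> dot (grad_risk gQ k a) v.
Proof.
move=> H.
have e : (fun h : R => h^-1 * (emp_risk Q k (h *: v + a) - emp_risk Q k a)) =
  (fun h => ((N k)%:R^-1) * \sum_(n < N k) (h^-1 * (Q k n (h *: v + a) - Q k n a))).
  apply: funext => h; rewrite /emp_risk -mulrBr -sumrB mulr_sumr mulr_sumr mulr_sumr.
  by apply: eq_bigr => n _; rewrite mulrCA.
rewrite e /grad_risk dotZl dot_suml.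
apply: cvgM; first exact: cvg_cst.
apply: cvg_sumF => n; exact: grad_quot.
Qed.

Lemma sc_first (f : vec -> R) (nu : R) (g : vec) u v : 0 < nu ->
  strongly_convex nu f ->
  (fun h : R => h^-1 * (f (h *: (u - v) + v) - f v)) @ 0^' --> dot g (u - v) ->
  f v + dot g (u - v) + nu / 4 * norm2 (u - v) <= f u.
Proof.
move=> nu0 sc H.
have H' := dnbhs_right H.
suff : dot g (u - v) <= f u - f v - nu / 4 * norm2 (u - v) by lra.
apply: (ler_cvg_to H' (cvg_cst _)).
near=> t.
have t0 : 0 < t by near: t; exact: nbhs_right_gt.
have t1 : t < 1/2 by near: t; apply: nbhs_right_lt; lra.
have t0' : 0 <= (t : R) by exact: ltW.
have t1' : (t : R) <= 1 by apply: ltW; apply: (lt_trans t1); lra.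
have ht : 0 <= (t : R) <= 1 by rewrite t0' t1'.
have := sc u v t ht.
have -> : t *: u + (1 - t) *: v = t *: (u - v) + v.
  by rewrite scalerBl scale1r scalerBr addrCA addrC.
move=> hsc.
have key : forall (X a b tt nn m : R),
  X <= tt * a + (1 - tt) * b - nn / 2 * tt * (1 - tt) * m ->
  0 <= tt * nn * m * (1/2 - tt) -> X - b <= tt * (a - b - nn / 4 * m).
  by move=> X a b tt nn m h1 h2; lra.
rewrite -(ler_pM2l t0) mulrA mulfV ?gt_eqF // mul1r.
apply: (key _ _ _ _ _ _ hsc).
apply: mulr_ge0; last by lra.
apply: mulr_ge0; last exact: norm2_ge0.
by apply: mulr_ge0; lra.
Unshelve. all: by end_near.
Qed.

End Analysis.

Section Grad.
Local Open Scope classical_set_scope.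
Unset Implicit Arguments.
Variables (R : realType) (M K : nat) (N : 'I_K -> nat).
Notation vec := 'rV[R]_M.
Variables (Q : forall k : 'I_K, 'I_(N k) -> vec -> R)
  (gQ : forall k : 'I_K, 'I_(N k) -> vec -> vec) (nu : R).
Set Implicit Arguments.
Hypothesis hg : forall k n, has_gradient (Q k n) (gQ k n).
Hypothesis nu0 : 0 < nu.
Hypothesis hsc : forall k, strongly_convex nu (emp_risk Q k).

Lemma strong_mono k u v :
  nu / 2 * norm2 (u - v) <= dot (grad_risk gQ k u - grad_risk gQ k v) (u - v).
Proof.
have h1 := sc_first nu0 (hsc k) (@risk_quot R M K N Q gQ k v (u - v) (@hg k)).
have h2 := sc_first nu0 (hsc k) (@risk_quot R M K N Q gQ k u (v - u) (@hg k)).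
rewrite (norm2_sym v u) in h2.
have e : dot (grad_risk gQ k u) (v - u) = - dot (grad_risk gQ k u) (u - v).
  by rewrite -dotNr opprB.
rewrite e in h2; rewrite dotBl; lra.
Qed.

Lemma min_grad wo : (0 < K)%N ->
  is_minimizer (fun w => (K%:R)^-1 * \sum_(k < K) emp_risk Q k w) wo ->
  forall d, \sum_(k < K) dot (grad_risk gQ k wo) d = 0.
Proof.
move=> K0 hmin.
have half : forall d, 0 <= \sum_(k < K) dot (grad_risk gQ k wo) d.
  move=> d.
  have hq : (fun h : R => h^-1 * ((K%:R)^-1 * \sum_(k < K) emp_risk Q k (h *: d + wo)
      - (K%:R)^-1 * \sum_(k < K) emp_risk Q k wo)) @ 0^'
      --> (K%:R)^-1 * \sum_(k < K) dot (grad_risk gQ k wo) d.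
    have e : (fun h : R => h^-1 * ((K%:R)^-1 * \sum_(k < K) emp_risk Q k (h *: d + wo)
      - (K%:R)^-1 * \sum_(k < K) emp_risk Q k wo)) =
      (fun h => (K%:R)^-1 * \sum_(k < K) (h^-1 * (emp_risk Q k (h *: d + wo) - emp_risk Q k wo))).
      apply: funext => h; rewrite -mulrBr -sumrB mulrCA mulr_sumr; congr (_ * _).
    rewrite e; apply: cvgM; first exact: cvg_cst.
    apply: cvg_sumF => k; exact: risk_quot.
  have hq' := dnbhs_right hq.
  have Kp : 0 < (K%:R)^-1 :> R by rewrite invr_gt0 ltr0n.
  rewrite -(pmulr_rge0 _ Kp).
  apply: (ler_cvg_to (cvg_cst 0) hq'); near=> t.
  have t0 : 0 < t by near: t; exact: nbhs_right_gt.
  apply: mulr_ge0; first by rewrite invr_ge0 ltW.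
  rewrite subr_ge0; exact: hmin.
move=> d; apply/eqP; rewrite eq_le half andbT.
have := half (- d).
under eq_bigr => k _ do rewrite dotNr.
by rewrite sumrN oppr_ge0.
Unshelve. all: by end_near.
Qed.

End Grad.

Section Design.
Variables (R : realType) (T : finType).

Lemma sum_setT (F : {set T} -> R) :
  \sum_(A <- enum [set: {set T}]) F A = \sum_A F A.
Proof. by rewrite big_enum; apply: eq_bigl => A; rewrite finset.in_setT. Qed.

Lemma design_swap n (p : T -> R) pi (F : T -> R) : sampling_design n p pi ->
  \sum_A pi A * \sum_(j in A) F j = \sum_j n%:R * p j * F j.
Proof.
case=> _ _ _ hin.
under eq_bigr => A _ do rewrite mulr_sumr big_mkcond /=.
rewrite exchange_big /=; apply: eq_bigr => j _.
rewrite -hin mulr_suml [RHS]big_mkcond /=; apply: eq_bigr => A _.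
by case: (j \in A); rewrite ?mul0r.
Qed.

Lemma design_le n (p : T -> R) pi (G H : {set T} -> R) : sampling_design n p pi ->
  (forall A : {set T}, #|A| = n -> G A <= H A) -> forall A, pi A * G A <= pi A * H A.
Proof.
case=> h0 _ hc _ hGH A; have [->|nz] := eqVneq (pi A) 0; first by rewrite !mul0r.
by apply: ler_wpM2l; [exact: h0 | apply: hGH; exact: hc].
Qed.

Lemma design_sum1 n (p : T -> R) pi : sampling_design n p pi -> \sum_A pi A = 1.
Proof. by case. Qed.

Lemma design_ge0 n (p : T -> R) pi : sampling_design n p pi -> forall A, 0 <= pi A.
Proof. by case. Qed.

End Design.

Section Agent.
Unset Implicit Arguments.
Variables (R : realType) (M K : nat) (N : 'I_K -> nat).
Notation vec := 'rV[R]_M.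
Variables (gQ : forall k : 'I_K, 'I_(N k) -> vec -> vec) (p : 'I_K -> R)
  (pn : forall k : 'I_K, 'I_(N k) -> R) (E B : 'I_K -> nat)
  (piB : forall k : 'I_K, {set 'I_(N k)} -> R) (delta : R) (wo : vec) (k : 'I_K).
Set Implicit Arguments.
Hypothesis hK : (0 < K)%N.
Hypothesis hB : (0 < B k)%N.
Hypothesis hE : (0 < E k)%N.
Hypothesis hN : (0 < N k)%N.
Hypothesis hp : 0 < p k.
Hypothesis hpn : forall n, 0 < pn k n.
Hypothesis hd : sampling_design (B k) (pn k) (piB k).
Hypothesis hdelta : 0 <= delta.
Hypothesis hlip : forall n, lipschitz_grad delta (gQ k n).

Notation LR mu e w := (local_run gQ p pn E B mu piB k e w).
Notation upd mu A w := (@local_update R M K N gQ p pn E B mu k A w).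

Definition beta mu := mu / (K%:R * p k * (E k)%:R).
Definition c0 := (K%:R * p k * (E k)%:R)^-1.
Definition Hk (v : vec) := \sum_(b < N k) ((N k)%:R ^+ 2 * pn k b)^-1 * norm2 (gQ k b v).
Definition cN := \sum_(b < N k) ((N k)%:R ^+ 2 * pn k b)^-1.

Lemma c0_gt0 : 0 < c0.
Proof. by rewrite /c0 invr_gt0 !mulr_gt0 // ltr0n. Qed.

Lemma cN_ge0 : 0 <= cN.
Proof. by apply: sumr_ge0 => b _; rewrite invr_ge0 ltW // mulr_gt0 ?exprn_gt0 ?ltr0n. Qed.

Lemma betaE mu : beta mu = mu * c0.
Proof. by []. Qed.

Lemma lr_step mu e w f :
  fexp (LR mu e.+1 w) f = fexp (LR mu e w) (fun v => \sum_A piB k A * f (upd mu A v)).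
Proof.
rewrite /= fexp_bind; apply: fexp_ext => v.
by rewrite fexp_map sum_setT.
Qed.

Lemma lr_nn mu e w : fnn (LR mu e w).
Proof.
elim: e => [|e IH] /=.
  by move=> z; rewrite inE => /eqP -> /=.
apply: fnn_bind => // v; apply: fnn_map => A; exact: (design_ge0 hd).
Qed.

Lemma lr_mass mu e w : fmass (LR mu e w) = 1.
Proof.
elim: e => [|e IH] /=.
  by rewrite /fmass /fexp big_cons big_nil mulr1 addr0.
apply: fmass_bind => // v; rewrite /fmass fexp_map sum_setT.
under eq_bigr do rewrite mulr1; exact: (design_sum1 hd).
Qed.

Lemma batch_lin mu (x v : vec) :
  \sum_A piB k A * dot x (v - upd mu A v) = beta mu * dot x (grad_risk gQ k v).
Proof.
under eq_bigr => A _ do rewrite /local_update opprB addrC subrK dotZr dot_sumr mulrCA.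
rewrite -mulr_sumr (design_swap _ hd).
under eq_bigr => b _ do rewrite dotZr.
rewrite /grad_risk dotZr dot_sumr /beta [RHS]mulrA [RHS]mulr_sumr [LHS]mulr_sumr; apply: eq_bigr => b _.
have pb := hpn b.
have Bn : (B k)%:R != 0 :> R by rewrite pnatr_eq0 -lt0n.
have Nn : (N k)%:R != 0 :> R by rewrite pnatr_eq0 -lt0n.
have pkn : p k != 0 by rewrite gt_eqF.
have En : (E k)%:R != 0 :> R by rewrite pnatr_eq0 -lt0n.
have Kn : K%:R != 0 :> R by rewrite pnatr_eq0 -lt0n.
field; rewrite Bn Nn pkn En Kn gt_eqF //.
Qed.


Lemma nz_facts : [/\ (B k)%:R != 0 :> R, (N k)%:R != 0 :> R, p k != 0,
   (E k)%:R != 0 :> R & K%:R != 0 :> R].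
Proof.
split; rewrite ?pnatr_eq0 -?lt0n // gt_eqF //.
Qed.

Lemma batch_quad mu (v : vec) :
  \sum_A piB k A * norm2 (v - upd mu A v) <= beta mu ^+ 2 * Hk v.
Proof.
set al := mu / (K%:R * p k * (E k)%:R * (B k)%:R).
set c := fun b : 'I_(N k) => ((N k)%:R * pn k b)^-1.
have e1 : forall A, norm2 (v - upd mu A v) =
    al ^+ 2 * norm2 (\sum_(b in A) (c b *: gQ k b v)).
  by move=> A; rewrite /local_update opprB addrC subrK norm2Z.
under eq_bigr => A _ do rewrite e1.
apply: le_trans (_ : \sum_A piB k A * (al ^+ 2 * ((B k)%:R *
     \sum_(b in A) norm2 (c b *: gQ k b v))) <= _).
  apply: ler_sum => A _; have [->|nz] := eqVneq (piB k A) 0; first by rewrite !mul0r.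
  apply: ler_wpM2l; first exact: (design_ge0 hd).
  apply: ler_wpM2l; first exact: sqr_ge0.
  have cA : #|A| = B k by case: hd => _ _ hc _; exact: hc.
  rewrite -cA; exact: norm2_sum_le.
under eq_bigr => A _ do rewrite mulrCA [piB k A * _]mulrCA mulrA.
rewrite -mulr_sumr (design_swap _ hd).
rewrite /Hk !mulr_sumr; apply: ler_sum => b _.
rewrite norm2Z /c /al /beta.
have pb := hpn b.
case: nz_facts => Bn Nn pkn En Kn.
rewrite le_eqVlt; apply/orP; left; apply/eqP; field.
by rewrite Bn Nn pkn En Kn gt_eqF.
Qed.

Lemma gQ_bound n (v : vec) :
  norm2 (gQ k n v) <= 2 * norm2 (gQ k n wo) + 2 * delta ^+ 2 * norm2 (v - wo).
Proof.
have := norm2D_le (gQ k n wo) (gQ k n v - gQ k n wo).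
rewrite addrC subrK => h; apply: (le_trans h).
have := hlip n v wo; lra.
Qed.

Lemma Hk_bound (v : vec) : Hk v <= 2 * Hk wo + 2 * delta ^+ 2 * cN * norm2 (v - wo).
Proof.
rewrite /Hk /cN.
set c := fun b : 'I_(N k) => ((N k)%:R ^+ 2 * pn k b)^-1.
apply: le_trans (_ : \sum_b c b * (2 * norm2 (gQ k b wo) + 2 * delta ^+ 2 * norm2 (v - wo)) <= _).
  apply: ler_sum => b _; apply: ler_wpM2l; last exact: gQ_bound.
  by rewrite invr_ge0 ltW // mulr_gt0 ?exprn_gt0 ?ltr0n.
rewrite le_eqVlt; apply/orP; left; apply/eqP.
under eq_bigr do rewrite mulrDr.
rewrite big_split /=; congr (_ + _).
  by rewrite mulr_sumr; apply: eq_bigr => b _; rewrite mulrCA.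
by rewrite mulr_sumr mulr_suml; apply: eq_bigr => b _; rewrite mulrCA mulrA.
Qed.

Lemma grad_lip (v w : vec) :
  norm2 (grad_risk gQ k v - grad_risk gQ k w) <= delta ^+ 2 * norm2 (v - w).
Proof.
rewrite /grad_risk -scalerBr -sumrB norm2Z.
have := norm2_sum_le_all (fun b : 'I_(N k) => gQ k b v - gQ k b w).
rewrite card_ord => h.
have h2 : \sum_i norm2 (gQ k i v - gQ k i w) <= (N k)%:R * (delta ^+ 2 * norm2 (v - w)).
  apply: le_trans (_ : \sum_(i < N k) (delta ^+ 2 * norm2 (v - w)) <= _).
    by apply: ler_sum => i _; exact: hlip.
  by rewrite sumr_const card_ord mulr_natl.
have Np : 0 < (N k)%:R :> R by rewrite ltr0n.
have h3 := le_trans h (ler_wpM2l (ltW Np) h2).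
rewrite exprVn; apply: (le_trans (ler_wpM2l _ h3)); first by rewrite invr_ge0 exprn_ge0 // ltW.
rewrite le_eqVlt; apply/orP; left; apply/eqP.
have Nn : (N k)%:R != 0 :> R by rewrite gt_eqF.
field; exact: Nn.
Qed.


Lemma arith_quad (n X G m2 c2 D Hv nvwo S : R) :
  0 <= n -> 0 <= X -> 0 <= G -> 0 <= m2 -> m2 <= 1 -> 0 <= c2 -> 0 <= D ->
  Hv <= 2 * G + 2 * D * nvwo -> nvwo <= 2 * n + 2 * X ->
  S <= 2 * n + 2 * (m2 * c2) * Hv ->
  S <= (2 + 8 * c2 * D) * n + m2 * (c2 * (4 + 8 * D)) * (G + X).
Proof.
move=> n0 X0 G0 m0 m1 c0' D0 hH hn hS.
have h1 : 2 * (m2 * c2) * Hv <= 2 * (m2 * c2) * (2 * G + 2 * D * (2 * n + 2 * X)).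
  apply: ler_wpM2l; first by apply: mulr_ge0 => //; apply: mulr_ge0.
  apply: (le_trans hH); apply: lerD => //; apply: ler_wpM2l => //.
  by apply: mulr_ge0.
have h2 : m2 * (c2 * D * n) <= c2 * D * n.
  by rewrite -[X in _ <= X]mul1r; apply: ler_wpM2r => //; apply: mulr_ge0 => //; apply: mulr_ge0.
have h3 : 0 <= m2 * c2 * X by do 2 apply: mulr_ge0 => //.
have h4 : 0 <= m2 * c2 * D * G by do 3 apply: mulr_ge0 => //.
lra.
Qed.

Lemma Hk_ge0 v : 0 <= Hk v.
Proof.
apply: sumr_ge0 => b _; apply: mulr_ge0; last exact: norm2_ge0.
by rewrite invr_ge0 ltW // mulr_gt0 ?exprn_gt0 ?ltr0n.
Qed.

Lemma lr_quad e : exists C, 0 <= C /\ forall mu w, 0 < mu <= 1 ->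
  fexp (LR mu e w) (fun v => norm2 (w - v)) <= C * mu ^+ 2 * (Hk wo + norm2 (w - wo)).
Proof.
elim: e => [|e [C [C0 IH]]].
  exists 0; split => // mu w _.
  by rewrite /fexp big_cons big_nil subrr /norm2 dot0l !mul0r mulr0 addr0.
set a1 := 2 + 8 * c0 ^+ 2 * delta ^+ 2 * cN.
set b1 := c0 ^+ 2 * (4 + 8 * (delta ^+ 2 * cN)).
have a10 : 0 <= a1.
  rewrite /a1; apply: addr_ge0 => //; apply: mulr_ge0; last exact: cN_ge0.
  by apply: mulr_ge0; [apply: mulr_ge0 => //; apply: sqr_ge0 | apply: sqr_ge0].
have D0 : 0 <= delta ^+ 2 * cN by apply: mulr_ge0; [apply: sqr_ge0 | exact: cN_ge0].
have b10 : 0 <= b1.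
  by rewrite /b1; apply: mulr_ge0; [apply: sqr_ge0 | apply: addr_ge0 => //; apply: mulr_ge0].
exists (a1 * C + b1); split; first by apply: addr_ge0 => //; apply: mulr_ge0.
move=> mu w /andP [mu0 mu1].
rewrite lr_step.
have pw : forall v, \sum_A piB k A * norm2 (w - upd mu A v) <=
    a1 * norm2 (w - v) + mu ^+ 2 * b1 * (Hk wo + norm2 (w - wo)).
  move=> v.
  have hS : \sum_A piB k A * norm2 (w - upd mu A v) <=
      2 * norm2 (w - v) + 2 * (mu ^+ 2 * c0 ^+ 2) * Hk v.
    apply: le_trans (_ : \sum_A piB k A * (2 * norm2 (w - v) + 2 * norm2 (v - upd mu A v)) <= _).
      apply: ler_sum => A _; apply: ler_wpM2l; first exact: (design_ge0 hd).
      have -> : w - upd mu A v = (w - v) + (v - upd mu A v) by rewrite addrA subrK.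
      exact: norm2D_le.
    under eq_bigr do rewrite mulrDr.
    rewrite big_split /= -mulr_suml (design_sum1 hd) mul1r.
    apply: lerD => //.
    under eq_bigr do rewrite mulrCA.
    rewrite -mulr_sumr -mulrA; apply: ler_wpM2l => //.
    by have := batch_quad mu v; rewrite betaE exprMn.
  have hn : norm2 (v - wo) <= 2 * norm2 (w - v) + 2 * norm2 (w - wo).
    have -> : v - wo = (v - w) + (w - wo) by rewrite addrA subrK.
    by rewrite (norm2_sym w v); exact: norm2D_le.
  have := arith_quad (norm2_ge0 (w - v)) (norm2_ge0 (w - wo)) (Hk_ge0 wo)
    (sqr_ge0 mu) _ (sqr_ge0 c0) D0 _ hn hS.
  rewrite /a1 /b1 !mulrA; apply.
    by rewrite expr_le1 // ltW.
  by have := Hk_bound v; rewrite expr2 !mulrA.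
apply: le_trans (fexp_le (@lr_nn mu e w) pw) _.
rewrite fexpD fexpZ fexp_cst lr_mass mulr1.
have := IH mu w (introT andP (conj mu0 mu1)).
move=> h.
apply: le_trans (lerD (ler_wpM2l a10 h) (lexx _)) _.
rewrite le_eqVlt; apply/orP; left; apply/eqP; ring.
Qed.


Lemma arith_lin (e1 b c Z C Cq tinv dd Y le qe : R) :
  0 <= b -> b <= c -> 0 <= tinv -> 0 <= dd -> 0 <= Y -> 0 <= Cq ->
  e1 * b * Z - C * Y <= le -> qe <= Cq * Y ->
  (e1 + 1) * b * Z - (C + c * tinv * dd * Cq) * Y <= le + b * Z - b * tinv * dd * qe.
Proof.
move=> b0 bc t0 d0 Y0 Cq0 hl hq.
have h1 : b * tinv * dd * qe <= b * tinv * dd * (Cq * Y).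
  by apply: ler_wpM2l => //; do 2 apply: mulr_ge0 => //.
have h2 : b * (tinv * dd * Cq * Y) <= c * (tinv * dd * Cq * Y).
  by apply: ler_wpM2r => //; do 3 apply: mulr_ge0 => //.
lra.
Qed.

Lemma lr_lin tt e : 0 < tt -> exists C, 0 <= C /\ forall mu w, 0 < mu <= 1 ->
  e%:R * beta mu * (dot (w - wo) (grad_risk gQ k w) - tt * norm2 (w - wo))
   - C * (mu ^+ 2 * (Hk wo + norm2 (w - wo)))
  <= fexp (LR mu e w) (fun v => dot (w - wo) (w - v)).
Proof.
move=> tt0; elim: e => [|e [C [C0 IH]]].
  exists 0; split => // mu w _.
  by rewrite /fexp big_cons big_nil subrr dot0r !mul0r subrr mulr0 addr0.
have [Cq [Cq0 Hq]] := lr_quad e.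
exists (C + c0 * tt^-1 * delta ^+ 2 * Cq); split.
  apply: addr_ge0 => //; apply: mulr_ge0 => //; apply: mulr_ge0; last exact: sqr_ge0.
  by apply: mulr_ge0; [exact: ltW c0_gt0 | rewrite invr_ge0 ltW].
move=> mu w hmu; have /andP [mu0 mu1] := hmu.
set x := w - wo.
have b0 : 0 <= beta mu by rewrite betaE mulr_ge0 // ltW // c0_gt0.
have pw : forall v, dot x (w - v) + beta mu * (dot x (grad_risk gQ k w) - tt * norm2 x)
     - beta mu * tt^-1 * delta ^+ 2 * norm2 (w - v)
    <= \sum_A piB k A * dot x (w - upd mu A v).
  move=> v.
  have e1 : \sum_A piB k A * dot x (w - upd mu A v) =
      dot x (w - v) + beta mu * dot x (grad_risk gQ k v).
    rewrite -(batch_lin mu x v) -[dot x (w - v)]mul1r -(design_sum1 hd) mulr_suml -big_split /=.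
    apply: eq_bigr => A _; rewrite -mulrDr -dotDr; congr (_ * dot x _).
    by rewrite addrA subrK.
  rewrite e1.
  have hy := young_abs x (grad_risk gQ k v - grad_risk gQ k w) tt0.
  have hl := grad_lip v w; rewrite (norm2_sym v w) in hl.
  have hx := norm2_ge0 x.
  have hg0 := norm2_ge0 (grad_risk gQ k v - grad_risk gQ k w).
  have ht : 0 <= tt^-1 by rewrite invr_ge0 ltW.
  have hy2 : tt^-1 * norm2 (grad_risk gQ k v - grad_risk gQ k w) <=
      tt^-1 * (delta ^+ 2 * norm2 (w - v)) by exact: ler_wpM2l.
  have key : dot x (grad_risk gQ k w) - tt * norm2 x - tt^-1 * delta ^+ 2 * norm2 (w - v)
      <= dot x (grad_risk gQ k v).
    rewrite dotBr in hy.
    have h5 : 0 <= tt * norm2 x by apply: mulr_ge0 => //; exact: ltW.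
    have h6 : 0 <= tt^-1 * delta ^+ 2 * norm2 (w - v).
      by apply: mulr_ge0; [apply: mulr_ge0 => //; exact: sqr_ge0 | exact: norm2_ge0].
    rewrite mulrA in hy2; lra.
  have := ler_wpM2l b0 key.
  lra.
rewrite lr_step; apply: (le_trans _ (fexp_le (@lr_nn mu e w) pw)).
rewrite fexpB fexpD fexp_cst lr_mass mulr1.
rewrite fexpZ -addn1 natrD.
have hY : 0 <= mu ^+ 2 * (Hk wo + norm2 (w - wo)).
  by apply: mulr_ge0; [exact: sqr_ge0 | apply: addr_ge0; [exact: Hk_ge0 | exact: norm2_ge0]].
have hq := Hq mu w hmu; rewrite -mulrA in hq.
rewrite /x; apply: (arith_lin b0 _ _ _ hY Cq0 (IH mu w hmu) hq).
- by rewrite betaE -[X in _ <= X]mul1r ler_wpM2r // ltW // c0_gt0.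
- by rewrite invr_ge0 ltW.
- exact: sqr_ge0.
Qed.

End Agent.

Lemma fexp_shift (R : realType) (M : nat) (d : fdist R M) (u : 'rV[R]_M) f :
  fexp [seq (x.1, u + x.2) | x <- d] f = fexp d (fun s => f (u + s)).
Proof. by rewrite /fexp big_map. Qed.

Lemma fnn_shift (R : realType) (M : nat) (d : fdist R M) (u : 'rV[R]_M) :
  fnn d -> fnn [seq (x.1, u + x.2) | x <- d].
Proof. by move=> nd z /mapP [x xd ->] /=; exact: nd. Qed.

Section Fed.
Unset Implicit Arguments.
Variables (R : realType) (M K : nat) (N : 'I_K -> nat).
Notation vec := 'rV[R]_M.
Variables (gQ : forall k : 'I_K, 'I_(N k) -> vec -> vec) (p : 'I_K -> R)
  (pn : forall k : 'I_K, 'I_(N k) -> R) (E B : 'I_K -> nat) (L : nat)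
  (piL : {set 'I_K} -> R)
  (piB : forall k : 'I_K, {set 'I_(N k)} -> R) (wo : vec).
Set Implicit Arguments.
Hypothesis hL : (0 < L)%N.
Hypothesis hdB : forall k, sampling_design (B k) (pn k) (piB k).
Hypothesis hdL : sampling_design L p piL.

Notation LR mu k w := (local_run gQ p pn E B mu piB k (E k) w).
Notation SL mu ks w := (sum_local gQ p pn E B mu piB ks w).

Lemma sl_nn mu ks w : fnn (SL mu ks w).
Proof.
elim: ks => [|k ks IH] /=.
  by move=> z; rewrite inE => /eqP -> /=.
apply: fnn_bind; first exact: (lr_nn (hdB k)).
move=> u; exact: fnn_shift.
Qed.

Lemma sl_mass mu ks w : fmass (SL mu ks w) = 1.
Proof.
elim: ks => [|k ks IH] /=.
  by rewrite /fmass /fexp big_cons big_nil mulr1 addr0.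
apply: fmass_bind; first exact: (lr_mass _ _ _ (hdB k)).
move=> u; by rewrite /fmass fexp_shift.
Qed.

Lemma sl_lin mu ks w (x : vec) :
  fexp (SL mu ks w) (fun s => dot x s) = \sum_(k <- ks) fexp (LR mu k w) (fun u => dot x u).
Proof.
elim: ks => [|k ks IH] /=.
  by rewrite big_nil /fexp big_cons big_nil dot0r mulr0 addr0.
rewrite fexp_bind big_cons.
rewrite (fexp_ext _ (g := fun u => dot x u + fexp (SL mu ks w) (fun s => dot x s))).
  by rewrite fexpD fexp_cst (lr_mass _ _ _ (hdB k)) mulr1 IH.
move=> u; rewrite fexp_shift.
rewrite (fexp_ext _ (g := fun s => dot x u + dot x s)); last by move=> s; rewrite dotDr.
by rewrite fexpD fexp_cst sl_mass mulr1.
Qed.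

Lemma sl_quad mu ks w :
  fexp (SL mu ks w) (fun s => norm2 ((size ks)%:R *: w - s))
   <= (size ks)%:R * \sum_(k <- ks) fexp (LR mu k w) (fun u => norm2 (w - u)).
Proof.
elim: ks => [|k ks IH] /=.
  by rewrite big_nil /fexp big_cons big_nil scale0r subrr /norm2 dot0r !mulr0 addr0.
rewrite fexp_bind big_cons.
case: ks IH => [|k' ks'] IH.
  rewrite big_nil addr0 mul1r /=.
  apply: fexp_le; first exact: (lr_nn (hdB k)).
  move=> u /=; rewrite /fexp /= big_cons big_nil addr0 mul1r.
  by rewrite scale1r addr0.
set n := size (k' :: ks').
have n0 : 0 < n%:R :> R by rewrite ltr0n.
set Q := \sum_(j <- k' :: ks') fexp (LR mu j w) (fun u => norm2 (w - u)).
have pw : forall u, fexp [seq (x.1, u + x.2) | x <- SL mu (k' :: ks') w]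
    (fun s => norm2 (n.+1%:R *: w - s)) <= (1 + n%:R) * norm2 (w - u) + (1 + n%:R^-1) * (n%:R * Q).
  move=> u; rewrite fexp_shift.
  apply: le_trans (_ : fexp (SL mu (k' :: ks') w)
     (fun s => (1 + n%:R) * norm2 (w - u) + (1 + n%:R^-1) * norm2 (n%:R *: w - s)) <= _).
    apply: fexp_le; first exact: sl_nn.
    move=> s.
    have -> : n.+1%:R *: w - (u + s) = (w - u) + (n%:R *: w - s).
      by apply/rowP => j; rewrite !mxE -natr1; ring.
    rewrite norm2D.
    have := young (w - u) (n%:R *: w - s) n0; lra.
  rewrite fexpD fexp_cst sl_mass mulr1 fexpZ.
  apply: lerD => //; apply: ler_wpM2l => //.
have hh := fexp_le (@lr_nn _ _ _ _ gQ p pn E B piB k (hdB k) mu (E k) w) pw.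
apply: (le_trans hh).
rewrite fexpD fexpZ fexp_cst (lr_mass _ _ _ (hdB k)) mulr1.
rewrite le_eqVlt; apply/orP; left; apply/eqP.
rewrite -natr1; field.
by rewrite gt_eqF.
Qed.


Lemma fed_exp mu w f :
  fexp (fed_step gQ p pn E B L mu piL piB w) f =
  \sum_A piL A * fexp (SL mu (enum A) w) (fun s => f (L%:R^-1 *: s)).
Proof.
rewrite /fed_step /fexp big_flatten /= big_map sum_setT; apply: eq_bigr => A _.
by rewrite big_map mulr_sumr; apply: eq_bigr => x _; rewrite mulrA.
Qed.

Lemma step_bound mu w :
  fexp (fed_step gQ p pn E B L mu piL piB w) (fun v => norm2 (wo - v)) <=
  norm2 (w - wo) - 2 * \sum_k p k * fexp (LR mu k w) (fun u => dot (w - wo) (w - u))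
  + \sum_k p k * fexp (LR mu k w) (fun u => norm2 (w - u)).
Proof.
set x := w - wo.
set lin := fun k => fexp (LR mu k w) (fun u => dot x (w - u)).
set qd := fun k => fexp (LR mu k w) (fun u => norm2 (w - u)).
have L0 : 0 < L%:R :> R by rewrite ltr0n.
have Ln : L%:R != 0 :> R by rewrite gt_eqF.
rewrite fed_exp.
apply: le_trans (_ : \sum_A piL A * (norm2 x - 2 * L%:R^-1 * \sum_(k in A) lin k
      + L%:R^-1 * \sum_(k in A) qd k) <= _).
  apply: ler_sum => A _; have [->|nz] := eqVneq (piL A) 0; first by rewrite !mul0r.
  apply: ler_wpM2l; first exact: (design_ge0 hdL).
  have cA : #|A| = L by case: hdL => _ _ hc _; exact: hc.
  have sz : size (enum A) = L by rewrite -cA cardE.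
  have pw : forall s, norm2 (wo - L%:R^-1 *: s) =
      L%:R^-1 ^+ 2 * norm2 (L%:R *: w - s) - 2 * L%:R^-1 * (L%:R * dot x w - dot x s) + norm2 x.
    move=> s.
    have -> : wo - L%:R^-1 *: s = L%:R^-1 *: (L%:R *: w - s) - x.
      by rewrite /x; apply/rowP => j; rewrite !mxE; field.
    rewrite norm2B norm2Z dotZl dotBl dotZl (dotC w x) (dotC s x); ring.
  rewrite (fexp_ext _ pw) fexpD fexpB fexpZ fexpZ fexpB fexp_cst fexp_cst sl_mass !mulr1.
  have hq := sl_quad mu (enum A) w; rewrite sz in hq.
  rewrite sl_lin.
  have e1 : L%:R * dot x w - \sum_(k <- enum A) fexp (LR mu k w) (fun u => dot x u)
      = \sum_(k in A) lin k.
    rewrite -big_enum /lin.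
    have -> : L%:R * dot x w = \sum_(k <- enum A) dot x w.
      by rewrite big_enum sumr_const cA mulr_natl.
    rewrite -sumrB; apply: eq_bigr => k _.
    rewrite [RHS](fexp_ext _ (g := fun u => dot x w - dot x u)); last by move=> u; rewrite dotBr.
    by rewrite fexpB fexp_cst (lr_mass _ _ _ (hdB k)) mulr1.
  rewrite e1.
  have e2 : \sum_(k <- enum A) qd k = \sum_(k in A) qd k by rewrite big_enum.
  rewrite /qd in e2; rewrite e2 in hq.
  have h3 : L%:R^-1 ^+ 2 * fexp (SL mu (enum A) w) (fun s => norm2 (L%:R *: w - s))
     <= L%:R^-1 * \sum_(k in A) qd k.
    have hc : 0 <= L%:R^-1 ^+ 2 :> R by apply: exprn_ge0; rewrite invr_ge0 ltW.
    apply: le_trans (ler_wpM2l hc hq) _.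
    rewrite le_eqVlt; apply/orP; left; apply/eqP; rewrite /qd; field; exact: Ln.
  lra.
rewrite le_eqVlt; apply/orP; left; apply/eqP.
under eq_bigr do rewrite mulrDr mulrBr.
rewrite big_split /= sumrB -mulr_suml (design_sum1 hdL) mul1r.
have s1 : \sum_A piL A * (2 / L%:R * \sum_(k in A) lin k) = 2 * \sum_k p k * lin k.
  under eq_bigr do rewrite mulrCA.
  rewrite -mulr_sumr (design_swap _ hdL) mulr_sumr [RHS]mulr_sumr.
  by apply: eq_bigr => k _; field.
have s2 : \sum_A piL A * (L%:R^-1 * \sum_(k in A) qd k) = \sum_k p k * qd k.
  under eq_bigr do rewrite mulrCA.
  rewrite -mulr_sumr (design_swap _ hdL) mulr_sumr.
  by apply: eq_bigr => k _; field.
by rewrite s1 s2.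
Qed.

End Fed.

Lemma single_le_sum (R : realType) (I : finType) (F : I -> R) (i : I) :
  (forall j, 0 <= F j) -> F i <= \sum_j F j.
Proof.
move=> h; rewrite (bigD1 i) //= -[X in X <= _]addr0; apply: lerD => //.
by apply: sumr_ge0.
Qed.

Section OneStep.
Unset Implicit Arguments.
Variables (R : realType) (M K : nat) (N : 'I_K -> nat).
Notation vec := 'rV[R]_M.
Variables (gQ : forall k : 'I_K, 'I_(N k) -> vec -> vec) (p : 'I_K -> R)
  (pn : forall k : 'I_K, 'I_(N k) -> R) (E B : 'I_K -> nat) (L : nat)
  (piL : {set 'I_K} -> R)
  (piB : forall k : 'I_K, {set 'I_(N k)} -> R) (wo : vec) (delta nu : R).
Set Implicit Arguments.
Hypothesis hK : (0 < K)%N.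
Hypothesis hL : (0 < L)%N.
Hypothesis hB : forall k, (0 < B k)%N.
Hypothesis hE : forall k, (0 < E k)%N.
Hypothesis hN : forall k, (0 < N k)%N.
Hypothesis hp : forall k, 0 < p k.
Hypothesis hpsum : \sum_k p k = 1.
Hypothesis hpn : forall k n, 0 < pn k n.
Hypothesis hdB : forall k, sampling_design (B k) (pn k) (piB k).
Hypothesis hdL : sampling_design L p piL.
Hypothesis hdelta : 0 <= delta.
Hypothesis hlip : forall k n, lipschitz_grad delta (gQ k n).
Hypothesis nu0 : 0 < nu.
Hypothesis hsm : forall k u v,
  nu / 2 * norm2 (u - v) <= dot (grad_risk gQ k u - grad_risk gQ k v) (u - v).
Hypothesis hmin : forall d, \sum_k dot (grad_risk gQ k wo) d = 0.

Definition Gtot := \sum_k Hk gQ pn k wo.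

Notation LR mu k w := (local_run gQ p pn E B mu piB k (E k) w).

Lemma one_step : exists C, 0 <= C /\ forall mu w, 0 < mu <= 1 ->
  fexp (fed_step gQ p pn E B L mu piL piB w) (fun v => norm2 (wo - v)) <=
  (1 - nu / 2 * mu + C * mu ^+ 2) * norm2 (w - wo) + C * mu ^+ 2 * Gtot.
Proof.
have tt0 : 0 < nu / 4 by rewrite divr_gt0.
have test : 0 < nu / 4 by lra.
have test2 : 0 < nu / 4 by move: nu0; lra.
have [fq hfq] := choice (fun k => lr_quad wo hK (hB k) (hE k) (hN k) (hp k) (@hpn k) (hdB k) (@hlip k) (E k)).
have [fl hfl] := choice (fun k => lr_lin wo hK (hB k) (hE k) (hN k) (hp k) (@hpn k) (hdB k) (@hlip k) (E k) tt0).
set Cl := \sum_k fl k.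
set Cq := \sum_k fq k.
have fl0 : forall k, 0 <= fl k by move=> k; case: (hfl k).
have fq0 : forall k, 0 <= fq k by move=> k; case: (hfq k).
have Cl0 : 0 <= Cl by apply: sumr_ge0.
have Cq0 : 0 <= Cq by apply: sumr_ge0.
have G0 : forall k, 0 <= Hk gQ pn k wo by move=> k; exact: Hk_ge0.
have Gle : forall k, Hk gQ pn k wo <= Gtot by move=> k; exact: single_le_sum.
have ple : forall k, p k <= 1.
  by move=> k; rewrite -hpsum; apply: single_le_sum => j; exact: ltW.
have Kp : 0 < K%:R :> R by rewrite ltr0n.
exists (2 * Cl + Cq); split; first by apply: addr_ge0 => //; apply: mulr_ge0.
move=> mu w hmu; have /andP [mu0 mu1] := hmu.
set x := w - wo.
set X := norm2 x.
have X0 : 0 <= X by exact: norm2_ge0.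
set Y := mu ^+ 2 * (Gtot + X).
have Y0 : 0 <= Y.
  apply: mulr_ge0; first exact: sqr_ge0.
  apply: addr_ge0 => //; apply: sumr_ge0 => k _; exact: G0.
have hs := step_bound gQ E wo hL hdB hdL mu w.
have hlin : forall k, mu / K%:R * dot x (grad_risk gQ k w) - mu / K%:R * (nu / 4 * X)
    - fl k * Y <= p k * fexp (LR mu k w) (fun u => dot x (w - u)).
  move=> k; have [_ h] := hfl k; have {}h := h mu w hmu.
  have pk := hp k.
  have h2 := ler_wpM2l (ltW pk) h.
  have e : p k * ((E k)%:R * beta p E k mu *
      (dot (w - wo) (grad_risk gQ k w) - nu / 4 * norm2 (w - wo))) =
      mu / K%:R * dot x (grad_risk gQ k w) - mu / K%:R * (nu / 4 * X).
    rewrite /beta /x /X.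
    have En : (E k)%:R != 0 :> R by rewrite pnatr_eq0 -lt0n.
    have Kn : K%:R != 0 :> R by rewrite gt_eqF.
    field; rewrite En Kn gt_eqF //.
  have h3 : p k * (fl k * (mu ^+ 2 * (Hk gQ pn k wo + norm2 (w - wo)))) <= fl k * Y.
    apply: le_trans (_ : 1 * (fl k * (mu ^+ 2 * (Hk gQ pn k wo + norm2 (w - wo)))) <= _).
      apply: ler_wpM2r => //; apply: mulr_ge0 => //; apply: mulr_ge0; first exact: sqr_ge0.
      by apply: addr_ge0 => //; exact: norm2_ge0.
    rewrite mul1r; apply: ler_wpM2l => //; apply: ler_wpM2l; first exact: sqr_ge0.
    by apply: lerD.
  rewrite mulrBr e in h2; lra.
have hquad : forall k, p k * fexp (LR mu k w) (fun u => norm2 (w - u)) <= fq k * Y.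
  move=> k; have [_ h] := hfq k; have {}h := h mu w hmu.
  have q0 : 0 <= fexp (LR mu k w) (fun u => norm2 (w - u)).
    apply: fexp_ge0; first exact: (lr_nn (hdB k)).
    move=> u; exact: norm2_ge0.
  apply: le_trans (_ : 1 * fexp (LR mu k w) (fun u => norm2 (w - u)) <= _).
    by apply: ler_wpM2r.
  rewrite mul1r; apply: (le_trans h); rewrite -mulrA; apply: ler_wpM2l => //.
  apply: ler_wpM2l; first exact: sqr_ge0.
  by apply: lerD.
have S1 : mu / K%:R * \sum_k dot x (grad_risk gQ k w) - mu * (nu / 4 * X) - Cl * Y
    <= \sum_k p k * fexp (LR mu k w) (fun u => dot x (w - u)).
  apply: le_trans (ler_sum _ (fun k _ => hlin k)).
  rewrite le_eqVlt; apply/orP; left; apply/eqP.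
  rewrite !sumrB sumr_const card_ord -mulr_suml mulr_sumr -mulr_natl.
  congr (_ - _ - _); field; rewrite gt_eqF //.
have S2 : \sum_k p k * fexp (LR mu k w) (fun u => norm2 (w - u)) <= Cq * Y.
  by rewrite /Cq mulr_suml; apply: ler_sum => k _; exact: hquad.
have S3 : K%:R * (nu / 2 * X) <= \sum_k dot x (grad_risk gQ k w).
  have e : \sum_k dot x (grad_risk gQ k w) =
      \sum_k dot (grad_risk gQ k w - grad_risk gQ k wo) x + \sum_k dot (grad_risk gQ k wo) x.
    rewrite -big_split /=; apply: eq_bigr => k _; rewrite dotBl subrK dotC //.
  rewrite e hmin addr0.
  apply: le_trans (_ : \sum_(k < K) (nu / 2 * X) <= _).
    by rewrite sumr_const card_ord mulr_natl.
  apply: ler_sum => k _; exact: hsm.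
have S4 : mu * (nu / 2 * X) <= mu / K%:R * \sum_k dot x (grad_risk gQ k w).
  have h := ler_wpM2l (_ : 0 <= mu / K%:R) S3.
  apply: le_trans (h _); last by rewrite divr_ge0 // ltW.
  rewrite le_eqVlt; apply/orP; left; apply/eqP; field; rewrite gt_eqF //.
rewrite -/x -/X in hs.
apply: (le_trans hs).
rewrite /Y in S1 S2 *.
lra.
Qed.


End OneStep.

Lemma fed_nn (R : realType) (M K : nat) (N : 'I_K -> nat) gQ p pn E B L mu piL piB
  (w : 'rV[R]_M) :
  (forall k, sampling_design (B k) (pn k) (piB k)) -> sampling_design L p piL ->
  fnn (@fed_step R M K N gQ p pn E B L mu piL piB w).
Proof.
move=> hdB hdL z; rewrite /fed_step => /flattenP [s /mapP [A _ ->]] /mapP [x xs ->] /=.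
apply: mulr_ge0; first exact: (design_ge0 hdL).
exact: (sl_nn hdB xs).
Qed.

Lemma fed_mass (R : realType) (M K : nat) (N : 'I_K -> nat) gQ p pn E B L mu piL piB
  (w : 'rV[R]_M) :
  (forall k, sampling_design (B k) (pn k) (piB k)) -> sampling_design L p piL ->
  fmass (@fed_step R M K N gQ p pn E B L mu piL piB w) = 1.
Proof.
move=> hdB hdL; rewrite /fmass fed_exp.
under eq_bigr => A _ do rewrite -/(fmass _) (sl_mass gQ p E hdB) mulr1.
exact: (design_sum1 hdL).
Qed.

Lemma isf_nn (R : realType) (M K : nat) (N : 'I_K -> nat) gQ p pn E B L mu piL piB
  i (w0 : 'rV[R]_M) :
  (forall k, sampling_design (B k) (pn k) (piB k)) -> sampling_design L p piL ->
  fnn (@isfedavg R M K N gQ p pn E B L mu piL piB i w0).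
Proof.
move=> hdB hdL; elim: i => [|i IH] /=.
  by move=> z; rewrite inE => /eqP -> /=.
apply: fnn_bind => // v; exact: fed_nn.
Qed.

Lemma isf_mass (R : realType) (M K : nat) (N : 'I_K -> nat) gQ p pn E B L mu piL piB
  i (w0 : 'rV[R]_M) :
  (forall k, sampling_design (B k) (pn k) (piB k)) -> sampling_design L p piL ->
  fmass (@isfedavg R M K N gQ p pn E B L mu piL piB i w0) = 1.
Proof.
move=> hdB hdL; elim: i => [|i IH] /=.
  by rewrite /fmass /fexp big_cons big_nil mulr1 addr0.
apply: fmass_bind => // v; exact: fed_mass.
Qed.

Lemma Gtot_le (R : realType) (M K : nat) (N : 'I_K -> nat)
  (gQ : forall k : 'I_K, 'I_(N k) -> 'rV[R]_M -> 'rV[R]_M) (p : 'I_K -> R)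
  (pn : forall k : 'I_K, 'I_(N k) -> R) (E B : 'I_K -> nat) (wo : 'rV[R]_M) :
  (0 < K)%N -> (forall k, (0 < E k)%N) -> (forall k, (0 < B k)%N) ->
  (forall k, (0 < N k)%N) -> (forall k, 0 < p k) -> (forall k n, 0 < pn k n) ->
  Gtot gQ pn wo <= (\sum_k (E k)%:R * (B k)%:R * K%:R ^+ 2 * p k / 6) * sigma_s2 gQ p pn E B wo.
Proof.
move=> hK hE hB hN hp hpn.
have sk0 : forall k, 0 <= sigma_sk2 gQ pn E B k wo.
  move=> k; apply: mulr_ge0.
    by apply: divr_ge0 => //; rewrite !mulr_ge0 // exprn_ge0.
  apply: sumr_ge0 => n _; apply: mulr_ge0; last exact: norm2_ge0.
  by rewrite invr_ge0 ltW.
have t0 : forall k, 0 <= (p k)^-1 * (sigma_sk2 gQ pn E B k wo +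
    (3 + 6 / ((E k)%:R * (B k)%:R)) * norm2 (grad_risk gQ k wo)).
  move=> k; apply: mulr_ge0; first by rewrite invr_ge0 ltW.
  apply: addr_ge0 => //; apply: mulr_ge0; last exact: norm2_ge0.
  by apply: addr_ge0 => //; apply: divr_ge0 => //; rewrite mulr_ge0.
rewrite /Gtot mulr_suml; apply: ler_sum => k _.
have Kp : 0 < K%:R :> R by rewrite ltr0n.
have pk := hp k.
have En : (E k)%:R != 0 :> R by rewrite pnatr_eq0 -lt0n.
have Bn : (B k)%:R != 0 :> R by rewrite pnatr_eq0 -lt0n.
have Nn : (N k)%:R != 0 :> R by rewrite pnatr_eq0 -lt0n.
have eH : Hk gQ pn k wo = (E k)%:R * (B k)%:R / 6 * sigma_sk2 gQ pn E B k wo.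
  rewrite /Hk /sigma_sk2 mulrA mulr_sumr; apply: eq_bigr => n _.
  have := hpn k n => pnk.
  field; rewrite En Bn Nn gt_eqF //.
have hs : (K%:R ^+ 2)^-1 * ((p k)^-1 * sigma_sk2 gQ pn E B k wo) <= sigma_s2 gQ p pn E B wo.
  rewrite /sigma_s2; apply: ler_wpM2l; first by rewrite invr_ge0 exprn_ge0 // ltW.
  apply: le_trans (single_le_sum k t0).
  apply: ler_wpM2l; first by rewrite invr_ge0 ltW.
  rewrite lerDl; apply: mulr_ge0; last exact: norm2_ge0.
  by apply: addr_ge0 => //; apply: divr_ge0 => //; rewrite mulr_ge0.
rewrite eH.
have c0 : 0 <= (E k)%:R * (B k)%:R * K%:R ^+ 2 * p k / 6 :> R.
  by apply: divr_ge0 => //; rewrite !mulr_ge0 // ?exprn_ge0 // ltW.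
apply: le_trans (ler_wpM2l c0 hs).
rewrite le_eqVlt; apply/orP; left; apply/eqP.
field; rewrite gt_eqF // gt_eqF //.
Qed.

Unset Implicit Arguments.
Theorem theorem1 (R : realType) (M K : nat) (N : 'I_K -> nat)
  (Q : forall k : 'I_K, 'I_(N k) -> 'rV[R]_M -> R)
  (gQ : forall k : 'I_K, 'I_(N k) -> 'rV[R]_M -> 'rV[R]_M)
  (nu delta xi : R) (wo : 'rV[R]_M) (wko : 'I_K -> 'rV[R]_M)
  (p : 'I_K -> R) (pn : forall k : 'I_K, 'I_(N k) -> R)
  (E B : 'I_K -> nat) (L : nat)
  (piL : {set 'I_K} -> R) (piB : forall k : 'I_K, {set 'I_(N k)} -> R)
  (w0 : 'rV[R]_M) :
  (* setting *)
  (0 < K)%N -> (0 < L)%N ->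
  (forall k, (0 < E k)%N) -> (forall k, (0 < B k)%N) ->
  (forall k n, has_gradient (Q k n) (gQ k n)) ->
  (* Assumption A *)
  0 < nu -> 0 <= delta ->
  (forall k, strongly_convex nu (emp_risk Q k)) ->
  (forall k n, convex_fun (Q k n)) ->
  (forall k n, lipschitz_grad delta (gQ k n)) ->
  (* minimizers *)
  is_minimizer (fun w => (K%:R)^-1 * \sum_(k < K) emp_risk Q k w) wo ->
  (forall k, is_minimizer (emp_risk Q k) (wko k)) ->
  (* Assumption B *)
  0 <= xi -> (forall k, norm2 (wko k - wo) <= xi ^+ 2) ->
  (* sampling of agents and of data, without replacement *)
  (forall k, 0 < p k) -> \sum_(k < K) p k = 1 ->
  (forall k n, 0 < pn k n) -> (forall k, \sum_(n < N k) pn k n = 1) ->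
  sampling_design L p piL ->
  (forall k, sampling_design (B k) (pn k) (piB k)) ->
  (* conclusion: for sufficiently small mu, exponential convergence in MSE *)
  exists mu0 : R, 0 < mu0 /\
  exists a b c1 c2 c3 : R,
    [/\ 0 <= a, 0 <= b, 0 <= c1, 0 <= c2 & 0 <= c3] /\
    forall mu : R, 0 < mu <= mu0 ->
      let lam := 1 - a * mu + b * mu ^+ 2 in
      0 <= lam < 1 /\
      forall i : nat,
        fexp (isfedavg gQ p pn E B L mu piL piB i w0) (fun w => norm2 (wo - w))
        <= c1 * lam ^+ i
           + c2 * mu * (sigma_s2 gQ p pn E B wo + xi ^+ 2)
           + c3 * mu ^+ 2 * ((K%:R)^-1 * \sum_(k < K) sigma_qk2 gQ pn B k (wko k)).
Proof.
move=> K0 L0 hE hB hg nu0 hdelta hsc hcvx hlip hmin hmink xi0 hxi hp hpsum hpn hpnsum hdL hdB.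
have hN : forall k, (0 < N k)%N.
  move=> k; rewrite lt0n; apply/negP => /eqP N0.
  have := hpnsum k; rewrite big1 => [/eqP|]; first by rewrite eq_sym oner_eq0.
  by move=> [m hm] _; exfalso; move: hm; rewrite N0.
have hsm := strong_mono hg nu0 hsc.
have hmin' := min_grad hg K0 hmin.
have [C [C0 HC]] := one_step K0 L0 hB hE hN hp hpsum hpn hdB hdL hlip nu0 hsm hmin'.
set a := nu / 2.
have a0 : 0 < a by rewrite divr_gt0.
set D := 1 + a + a ^+ 2 + 2 * C.
have D0 : 0 < D.
  rewrite /D; have : 0 <= a ^+ 2 by exact: sqr_ge0. lra.
set g := \sum_k (E k)%:R * (B k)%:R * K%:R ^+ 2 * p k / 6.
have g0 : 0 <= g.
  apply: sumr_ge0 => k _; apply: divr_ge0 => //; rewrite !mulr_ge0 // ?exprn_ge0 //.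
  exact: ltW.
have hG := @Gtot_le _ _ _ _ gQ p pn E B wo K0 hE hB hN hp hpn.
have Gt0 : 0 <= Gtot gQ pn wo.
  by apply: sumr_ge0 => k _; exact: Hk_ge0.
exists (a / D); split; first by rewrite divr_gt0.
exists a, C, (norm2 (wo - w0)), (2 * C / a * g), 0.
split.
  split => //; [exact: ltW | exact: norm2_ge0 | ].
  by apply: mulr_ge0 => //; apply: divr_ge0 => //; [rewrite mulr_ge0 | exact: ltW].
move=> mu /andP [mup mule] lam.
have hD : mu * D <= a by rewrite -ler_pdivlMr.
have mC : 0 <= mu * C by rewrite mulr_ge0 // ltW.
have ma2 : 0 <= mu * a ^+ 2 by apply: mulr_ge0; [exact: ltW | exact: sqr_ge0].
have ma : 0 <= mu * a by apply: mulr_ge0; apply: ltW.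
have e1 : mu * D = mu + mu * a + mu * a ^+ 2 + 2 * (mu * C) by rewrite /D; ring.
have mu1 : mu <= 1 by nra.
have amu1 : a * mu <= 1.
  have : mu * a ^+ 2 <= a by lra.
  rewrite expr2 => h; nra.
have Cmu : C * mu <= a / 2 by lra.
have lam0 : 0 <= lam.
  rewrite /lam; have : 0 <= C * mu ^+ 2 by rewrite mulr_ge0 // sqr_ge0. lra.
have lam1 : 1 - lam >= a * mu / 2.
  rewrite /lam; have : C * mu ^+ 2 <= a / 2 * mu.
    by rewrite expr2 mulrA; apply: ler_wpM2r => //; exact: ltW.
  lra.
have amu0 : 0 < a * mu / 2 by rewrite divr_gt0 // mulr_gt0.
split; first by apply/andP; split => //; lra.
have dnn := fun i => @isf_nn _ _ _ _ gQ p pn E B L mu piL piB i w0 hdB hdL.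
have dmass := fun i => @isf_mass _ _ _ _ gQ p pn E B L mu piL piB i w0 hdB hdL.
set Dd := C * mu ^+ 2 * Gtot gQ pn wo / (1 - lam).
have Dd0 : 0 <= Dd.
  apply: divr_ge0; last lra.
  by apply: mulr_ge0 => //; rewrite mulr_ge0 // sqr_ge0.
have rec : forall i, fexp (isfedavg gQ p pn E B L mu piL piB i w0) (fun w => norm2 (wo - w))
    <= lam ^+ i * norm2 (wo - w0) + Dd.
  elim => [|i IH].
    rewrite /= /fexp big_cons big_nil mul1r addr0 /=.
    by rewrite lerDl.
  rewrite /= fexp_bind.
  have hmu : 0 < mu <= 1 by rewrite mup mu1.
  have pw : forall w, fexp (fed_step gQ p pn E B L mu piL piB w) (fun v => norm2 (wo - v))
      <= lam * norm2 (wo - w) + C * mu ^+ 2 * Gtot gQ pn wo.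
    by move=> w; have := HC mu w hmu; rewrite (norm2_sym w wo).
  apply: le_trans (fexp_le (dnn i) pw) _.
  rewrite fexpD fexpZ fexp_cst dmass mulr1.
  apply: le_trans (lerD (ler_wpM2l lam0 IH) (lexx _)) _.
  have eD : C * mu ^+ 2 * Gtot gQ pn wo = (1 - lam) * Dd.
    rewrite /Dd; field; rewrite subr_eq0; apply/negP => /eqP h.
    by move: lam1; rewrite -h subrr; lra.
  rewrite eD exprS; lra.
have hDd : Dd <= 2 * C / a * g * mu * sigma_s2 gQ p pn E B wo.
  rewrite /Dd ler_pdivrMr; last lra.
  have s0 : 0 <= sigma_s2 gQ p pn E B wo.
    rewrite /sigma_s2; apply: mulr_ge0; first by rewrite invr_ge0 exprn_ge0.
    apply: sumr_ge0 => k _; apply: mulr_ge0; first by rewrite invr_ge0 ltW.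
    apply: addr_ge0.
      apply: mulr_ge0; first by apply: divr_ge0 => //; rewrite !mulr_ge0 // exprn_ge0.
      apply: sumr_ge0 => n _; apply: mulr_ge0; last exact: norm2_ge0.
      by rewrite invr_ge0 ltW.
    apply: mulr_ge0; last exact: norm2_ge0.
    by apply: addr_ge0 => //; apply: divr_ge0 => //; rewrite mulr_ge0.
  have X0 : 0 <= 2 * C / a * g * mu * sigma_s2 gQ p pn E B wo.
    apply: mulr_ge0 => //; apply: mulr_ge0; last exact: ltW.
    apply: mulr_ge0 => //; apply: mulr_ge0; last by rewrite invr_ge0 ltW.
    by apply: mulr_ge0.
  apply: le_trans (_ : (2 * C / a * g * mu * sigma_s2 gQ p pn E B wo) * (a * mu / 2) <= _);
    last by apply: ler_wpM2l.
  have h1 : C * mu ^+ 2 * Gtot gQ pn wo <= C * mu ^+ 2 * (g * sigma_s2 gQ p pn E B wo).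
    by apply: ler_wpM2l => //; rewrite mulr_ge0 // sqr_ge0.
  apply: (le_trans h1); rewrite le_eqVlt; apply/orP; left; apply/eqP.
  field; rewrite gt_eqF //.
move=> i; apply: (le_trans (rec i)).
rewrite mul0r mul0r addr0 mulrC.
apply: lerD => //.
apply: (le_trans hDd).
apply: ler_wpM2l; last by rewrite lerDl sqr_ge0.
apply: mulr_ge0; last exact: ltW.
apply: mulr_ge0 => //; apply: mulr_ge0; last by rewrite invr_ge0 ltW.
by apply: mulr_ge0.
Qed.
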